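(* Let $(\Omega,\mathcal{F},(\mathcal{F}_t)_{t\ge 0},\mathbb{P})$ be a filtered probability space, let $n\ge 1$, and for each $k\in\{1,\dots,n\}$ let $(B^{(k)}_t)_{t\ge 0}$ be a standard $(\mathcal{F}_t)$-Brownian motion (adapted to $(\mathcal{F}_t)$, with $B^{(k)}_{t+s}-B^{(k)}_t$ independent of $\mathcal{F}_t$ for all $s,t\ge 0$), let $a_k,\sigma_k\in\mathbb{R}$, and set $X^{*(k)}_t=\sigma_k tB^{(k)}_t + a_k t$ (so $X^{*(k)}_0=0$ and $X^{*(k)}_t$ is $\mathcal{F}_t$-measurable). Let $c_1,\dots,c_n\in\mathbb{R}$ be arbitrary constants and put $S_t=\sum_{k=1}^n c_k X^{*(k)}_t$. Then for every $t>0$ with $S_t\neq 0$ and every $s\ge 0$, $$E(S_{t+s}-S_t\mid\mathcal{F}_t)=\frac{s}{t}S_t\quad\text{a.s.},$$ i.e. $(S_t)_{t>0}$ is a process with proportional increments.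
   Context: A process $(N_t)_{t>0}$ adapted to a filtration $(\mathcal{F}_t)$ has proportional increments if for all $t>0$ with $N_t\neq 0$ and all $s\ge 0$: $E(N_{t+s}-N_t\mid\mathcal{F}_t)=\frac{s}{t}N_t$ almost surely. *)

(* Defs.v *)
From HB Require Import structures.
From mathcomp Require Import all_boot all_order all_algebra.
From mathcomp Require Import all_classical all_reals all_analysis.
Set Implicit Arguments. Unset Strict Implicit. Unset Printing Implicit Defensive.
Import Order.TTheory GRing.Theory Num.Theory.
Import numFieldNormedType.Exports.
Local Open Scope classical_set_scope.
Local Open Scope ring_scope.

Definition filtration d (T : measurableType d) (R : realType)
    (F : R -> set (set T)) : Prop :=
  (forall t, 0 <= t -> sigma_algebra setT (F t)) /\
  (forall t, 0 <= t -> F t `<=` measurable) /\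
  (forall s t, 0 <= s -> s <= t -> F s `<=` F t).

Definition measurable_wrt d (T : measurableType d) (R : realType)
    (G : set (set T)) (X : T -> R) : Prop :=
  forall B : set R, measurable B -> G (X @^-1` B).

Definition indep_of d (T : measurableType d) (R : realType)
    (P : probability T R) (G : set (set T)) (X : T -> R) : Prop :=
  forall A B, G A -> measurable B ->
    P (A `&` X @^-1` B) = (P A * P (X @^-1` B))%E.

Definition brownian_motion d (T : measurableType d) (R : realType)
    (P : probability T R) (F : R -> set (set T)) (B : R -> T -> R) : Prop :=
  (forall w, B 0 w = 0) /\
  (forall w, {within `[0, +oo[, continuous (fun t => B t w)}) /\
  (forall t, 0 <= t -> measurable_wrt (F t) (B t)) /\
  (forall t s, 0 <= t -> 0 <= s -> indep_of P (F t) (fun w => B (t + s) w - B t w)) /\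
  (forall t s, 0 <= t -> 0 < s -> forall A : set R, measurable A ->
     P ((fun w => B (t + s) w - B t w) @^-1` A) = normal_prob 0 (Num.sqrt s) A).

Definition cond_exp_version d (T : measurableType d) (R : realType)
    (P : probability T R) (G : set (set T)) (X Y : T -> R) : Prop :=
  P.-integrable setT (EFin \o X) /\
  measurable_wrt G Y /\
  P.-integrable setT (EFin \o Y) /\
  (forall A, G A -> (\int[P]_(w in A) (Y w)%:E = \int[P]_(w in A) (X w)%:E)%E).

Definition proportional_increments d (T : measurableType d) (R : realType)
    (P : probability T R) (F : R -> set (set T)) (N : R -> T -> R) : Prop :=
  forall t s, 0 < t -> N t <> (fun _ => 0) -> 0 <= s ->
    cond_exp_version P (F t) (fun w => N (t + s) w - N t w)
      (fun w => s / t * N t w).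

(* Main.v *)
Require Import Defs.
From HB Require Import structures.
From mathcomp Require Import all_boot all_order all_algebra.
From mathcomp Require Import all_classical all_reals all_analysis measurable_realfun.
From mathcomp Require Import lra ring.
Set Implicit Arguments. Unset Strict Implicit. Unset Printing Implicit Defensive.
Import Order.TTheory GRing.Theory Num.Theory.
Import numFieldNormedType.Exports.
Local Open Scope classical_set_scope.
Local Open Scope ring_scope.
Local Close Scope ereal_scope.
Lemma normal_key (R : realType) (sg x : R) : sg != 0 ->
  `|x| * normal_pdf 0 sg x <=
  (normal_peak sg * (1 + 8 * sg ^+ 2 / 3) / normal_peak (2 * sg)) * normal_pdf 0 (2 * sg) x.
Proof.
move=> s0.
have s20 : 2 * sg != 0 by rewrite mulf_neq0.
have v0 : 0 < sg ^+ 2 by rewrite exprn_even_gt0.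
rewrite /normal_pdf (negbTE s0) (negbTE s20) /normal_fun !subr0.
set p := normal_peak sg; set q := normal_peak (2 * sg).
have p0 : 0 < p by exact: normal_peak_gt0.
have q0 : 0 < q by exact: normal_peak_gt0.
set y := 3 * x ^+ 2 / (8 * sg ^+ 2).
have -> : - x ^+ 2 / (sg ^+ 2 *+ 2) = - x ^+ 2 / ((2 * sg) ^+ 2 *+ 2) + - y.
  by rewrite /y; field.
rewrite expRD.
set e1 := expR _; set e2 := expR (- y).
have e10 : 0 <= e1 by exact: expR_ge0.
have e20 : 0 < e2 by exact: expR_gt0.
have E1 : expR y * e2 = 1 by rewrite /e2 -expRD subrr expR0.
have Ey : 1 + y <= expR y by exact: expR_ge1Dx.
set C := 1 + 8 * sg ^+ 2 / 3.
have y0 : 0 <= y by rewrite /y; apply: divr_ge0; nra.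
have hx : `|x| <= 1 + x ^+ 2.
  rewrite -(real_normK (num_real x)); nra.
have Cy : 1 + x ^+ 2 <= C * (1 + y).
  rewrite /C /y; rewrite -subr_ge0.
  have -> : (1 + 8 * sg ^+ 2 / 3) * (1 + 3 * x ^+ 2 / (8 * sg ^+ 2)) - (1 + x ^+ 2)
     = 8 * sg ^+ 2 / 3 + x ^+ 2 / (8 * sg ^+ 2) * 3.
    by field.
  by apply: addr_ge0; [apply: divr_ge0; nra | apply: mulr_ge0 => //; apply: divr_ge0; nra].
have C0 : 0 < C.
  have h : 0 <= 8 * sg ^+ 2 / 3 by apply: divr_ge0; nra.
  rewrite /C; lra.
have hxE : `|x| <= C * expR y.
  apply: (le_trans hx); apply: (le_trans Cy); rewrite ler_pM2l //.
have h2 : `|x| * e2 <= C.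
  have := ler_wpM2r (ltW e20) hxE; rewrite -mulrA E1 mulr1 //.
rewrite -/C.
have -> : p * C / q * (q * e1) = (p * e1) * C by field; rewrite gt_eqF.
have -> : `|x| * (p * (e1 * e2)) = (p * e1) * (`|x| * e2) by ring.
by rewrite ler_wpM2l // mulr_ge0 // ltW.
Qed.
Local Close Scope ereal_scope.
Local Open Scope ereal_scope.
Lemma normal_ge0_integral (R : realType) (sg : R) (f : R -> \bar R) :
  (forall x, 0 <= f x) -> measurable_fun [set: R] f ->
  \int[normal_prob 0 sg]_x f x =
  \int[lebesgue_measure]_x (f x * (normal_pdf 0 sg x)%:E).
Proof.
move=> f0 mf.
have dom := @normal_prob_dominates R 0 sg.
rewrite -(Radon_Nikodym_SigmaFinite.change_of_variables dom)//.
apply: ae_eq_integral => //.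
- apply: emeasurable_funM => //; apply: (measurable_int lebesgue_measure).
  exact: Radon_Nikodym_SigmaFinite.f_integrable.
- apply: emeasurable_funM => //=; apply/measurableT_comp => //=.
  exact: measurable_normal_pdf.
- apply: ae_eqe_mul2l => /=.
  apply: integral_ae_eq => //=.
  + exact: Radon_Nikodym_SigmaFinite.f_integrable.
  + by apply/measurableT_comp =>//; exact: measurable_normal_pdf.
  + by move=> E _ mE; rewrite -Radon_Nikodym_SigmaFinite.f_integral.
Qed.
Local Close Scope ereal_scope.
Local Open Scope ereal_scope.
Lemma normal_pdfN (R : realType) (sg x : R) : sg != 0%R ->
  normal_pdf 0 sg (- x) = normal_pdf 0 sg x.
Proof.
by move=> s0; rewrite /normal_pdf (negbTE s0) /normal_fun !subr0 sqrrN.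
Qed.

Lemma normal_probN (R : realType) (sg : R) (E : set R) : sg != 0%R ->
  measurable E ->
  normal_prob 0 sg ((-%R) @^-1` E) = normal_prob 0 sg E.
Proof.
move=> s0 mE; rewrite /normal_prob.
transitivity (\int[lebesgue_measure]_(x in (-%R) @^-1` E)
   ((fun y => (normal_pdf 0 sg y)%:E) \o (-%R)) x).
  by apply: eq_integral => x _ /=; rewrite normal_pdfN.
transitivity (\int[pushforward lebesgue_measure (-%R : _ -> measurableTypeR R)]_(y in E) (normal_pdf 0 sg y)%:E).
  rewrite ge0_integral_pushforward//=.
  - by apply/measurable_funTS/measurable_EFinP; exact: measurable_normal_pdf.
  - by move=> y _; rewrite lee_fin normal_pdf_ge0.
apply: eq_measure_integral => A mA _.
exact: lebesgue_measureN.
Qed.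
Local Close Scope ereal_scope.
Local Open Scope ereal_scope.
Lemma normal_abs_int (R : realType) (sg : R) : sg != 0%R ->
  \int[normal_prob 0 sg]_x (`|x|%R)%:E < +oo.
Proof.
move=> s0.
rewrite normal_ge0_integral//; last first.
  by apply/measurable_EFinP; exact: normr_measurable.
set K := (normal_peak sg * (1 + 8 * sg ^+ 2 / 3) / normal_peak (2 * sg))%R.
have K0 : (0 <= K)%R.
  rewrite /K; apply: divr_ge0; last exact: normal_peak_ge0.
  apply: mulr_ge0; first exact: normal_peak_ge0.
  have h : (0 <= 8 * sg ^+ 2 / 3)%R by apply: divr_ge0; nra.
  lra.
apply: (@le_lt_trans _ _ (\int[lebesgue_measure]_x (K%:E * (normal_pdf 0 (2 * sg) x)%:E))).
  apply: ge0_le_integral => //.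
  - by move=> x _; rewrite -EFinM lee_fin mulr_ge0 // normal_pdf_ge0.
  - apply: emeasurable_funM; apply/measurable_EFinP; first exact: normr_measurable.
    exact: measurable_normal_pdf.
  - apply/measurable_EFinP; apply: measurable_funM => //.
    exact: measurable_normal_pdf.
  - by move=> x _; rewrite -!EFinM lee_fin normal_key.
rewrite ge0_integralZl//.
- by rewrite integral_normal_pdf mule1 ltry.
- by apply/measurable_EFinP; exact: measurable_normal_pdf.
- by move=> x _; rewrite lee_fin normal_pdf_ge0.
Qed.
Local Close Scope ereal_scope.
Local Open Scope ereal_scope.
Section Plevel.
Context d (T : measurableType d) (R : realType) (P : probability T R).

Lemma integrable_normal (Z : T -> R) (sg : R) : sg != 0%R ->
  measurable_fun setT Z ->
  (forall E : set R, measurable E -> P (Z @^-1` E) = normal_prob 0 sg E) ->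
  P.-integrable setT (EFin \o Z).
Proof.
move=> s0 mZ hZ; apply/integrableP; split; first exact/measurable_EFinP.
have mZ' : measurable_fun setT (Z : T -> measurableTypeR R) by exact: mZ.
rewrite (_ : \int[P]_(x in [set: T]) `|(EFin \o Z) x| =
  \int[pushforward P (Z : T -> measurableTypeR R)]_(y in setT) (`|y|%R)%:E); last first.
  rewrite ge0_integral_pushforward//=.
  by apply/measurable_EFinP; exact: normr_measurable.
rewrite (eq_measure_integral (normal_prob 0 sg)); last first.
  by move=> E mE _; exact: hZ.
by have := normal_abs_int s0.
Qed.
End Plevel.
Local Close Scope ereal_scope.
Section Plevel2.
Local Open Scope ereal_scope.
Context d (T : measurableType d) (R : realType) (P : probability T R).

Lemma indep_mean0 (Z : T -> R) (sg : R) (A : set T) : sg != 0%R ->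
  measurable A -> measurable_fun setT Z ->
  (forall E : set R, measurable E -> P (Z @^-1` E) = normal_prob 0 sg E) ->
  (forall E : set R, measurable E -> P (A `&` Z @^-1` E) = P A * P (Z @^-1` E)) ->
  \int[P]_(x in A) (Z x)%:E = 0.
Proof.
move=> s0 mA mZ hZ hI.
have iZ := integrable_normal s0 mZ hZ.
pose phi w := (Z w * \1_A w)%R.
have mphi : measurable_fun setT phi.
  by apply: measurable_funM => //; exact: measurable_indic.
have eqI : \int[P]_(x in A) (Z x)%:E = \int[P]_x (phi x)%:E.
  rewrite integral_mkcond; apply: eq_integral => x _.
  by rewrite /patch /phi indicE; case: ifP => _; rewrite ?mulr1 ?mulr0.
have iphi : P.-integrable setT (EFin \o phi).
  apply: le_integrable iZ => //; first exact/measurable_EFinP.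
  move=> x _ /=; rewrite lee_fin /phi normrM indicE.
  by case: (x \in A); rewrite ?normr1 ?normr0 ?mulr1 ?mulr0.
have CE (E : set R) : measurable [set _ : T | E 0%R].
  by have [e0|e0] := pselect (E 0%R);
    [rewrite (_ : [set _ | _] = setT)|rewrite (_ : [set _ | _] = set0)] => //;
    apply/seteqP; split.
have dec (E : set R) : phi @^-1` E = (A `&` Z @^-1` E) `|` (~` A `&` [set _ | E 0%R]).
  apply/seteqP; split => x /=; rewrite /phi indicE;
    case: (boolP (x \in A)) => xA; rewrite ?mulr1 ?mulr0.
  - by move=> ?; left; split => //; exact: set_mem.
  - by move=> ?; right; split => // Ax; move: xA; rewrite (mem_set Ax).
  - by case => -[Ax h] //; exfalso; exact/Ax/set_mem.
  - by case => -[Ax h] //; move: xA; rewrite (mem_set Ax).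
have PE (E : set R) : measurable E ->
    P (phi @^-1` E) = P (A `&` Z @^-1` E) + P (~` A `&` [set _ | E 0%R]).
  move=> mE; rewrite dec measureU//.
  - by apply: measurableI => //; rewrite -[X in measurable X]setTI; exact: mZ.
  - by apply: measurableI => //; exact: measurableC.
  - by apply/seteqP; split => // x /= [[xA _] [nxA _]].
have mN (E : set R) : measurable E -> measurable ((-%R) @^-1` E).
  by move=> mE; rewrite -[X in measurable X]setTI; exact: oppr_measurable.
have symP (E : set R) : measurable E ->
    P (phi @^-1` E) = P (phi @^-1` ((-%R) @^-1` E)).
  move=> mE; rewrite PE // PE; last exact: mN.
  rewrite /= oppr0 hI // hI; last exact: mN.
  by rewrite hZ // hZ ?normal_probN //; exact: mN.
set nphi := fun w => (- phi w)%R.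
have mnphi : measurable_fun setT nphi by exact: measurable_funN.
have mphi' : measurable_fun setT (phi : T -> measurableTypeR R) by exact: mphi.
have mnphi' : measurable_fun setT (nphi : T -> measurableTypeR R) by exact: mnphi.
have inphi : P.-integrable setT (EFin \o nphi).
  by apply: eq_integrable (integrableN iphi).
have key : \int[P]_x (phi x)%:E = \int[P]_x (nphi x)%:E.
  have h1 := @integral_pushforward _ _ _ _ R phi mphi' P setT (@EFin R)
     (@EFin_measurable R setT) iphi measurableT.
  have h2 := @integral_pushforward _ _ _ _ R nphi mnphi' P setT (@EFin R)
     (@EFin_measurable R setT) inphi measurableT.
  rewrite /= in h1 h2.
  rewrite -h1 -h2.
  apply: eq_measure_integral => E mE _ /=.
  by rewrite /pushforward; exact: (symP E mE).
have : \int[P]_x (phi x)%:E = - \int[P]_x (phi x)%:E.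
  rewrite [in LHS]key -integralN //=.
  by apply: fin_num_adde_defl; rewrite fin_numN; apply: integrable_fin_num => //; exact: integrable_funeneg.
rewrite eqI.
have hfin : \int[P]_x (phi x)%:E \is a fin_num by apply: integrable_fin_num.
move: hfin.
case: (\int[P]_x (phi x)%:E) => // r _ /eqP.
rewrite eqe => /eqP h; congr EFin; lra.
Qed.
End Plevel2.
Local Close Scope ereal_scope.
Lemma sum_closed (T : Type) (R : realType) (Q : (T -> R) -> Prop) n
    (F : 'I_n -> T -> R) :
  Q (fun _ => 0%R) -> (forall f g, Q f -> Q g -> Q (f \+ g)) ->
  (forall k, Q (F k)) -> Q (fun w => \sum_(k < n) F k w).
Proof.
move=> Q0 QD QF; rewrite -fct_sumE.
by apply: (big_ind Q) => // f g; exact: QD.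
Qed.

Section closure.
Local Open Scope ereal_scope.
Context d (T : measurableType d) (R : realType) (P : probability T R).

Definition Int (f : T -> R) := P.-integrable setT (EFin \o f).

Lemma Int0 : Int (fun _ => 0%R).
Proof. exact: finite_measure_integrable_cst. Qed.

Lemma IntD f g : Int f -> Int g -> Int (f \+ g)%R.
Proof.
move=> hf hg; apply: eq_integrable (integrableD _ hf hg) => //.
Qed.

Lemma IntZ (k : R) f : Int f -> Int (fun w => k * f w)%R.
Proof.
move=> hf; apply: eq_integrable (integrableZl _ k hf) => //.
Qed.

Lemma IntB f g : Int f -> Int g -> Int (fun w => f w - g w)%R.
Proof.
move=> hf hg; apply: (IntD hf); apply: eq_integrable (IntZ (-1) hg) => //.
by move=> x _ /=; rewrite mulN1r.
Qed.

Lemma Int_sum n (F : 'I_n -> T -> R) :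
  (forall k, Int (F k)) -> Int (fun w => \sum_(k < n) F k w)%R.
Proof. by move=> h; apply: (@sum_closed _ _ Int) => //; [exact: Int0 | exact: IntD]. Qed.

Definition Zr (A : set T) (f : T -> R) := Int f /\ \int[P]_(x in A) (f x)%:E = 0.

Lemma ZrD A f g : measurable A -> Zr A f -> Zr A g -> Zr A (f \+ g)%R.
Proof.
move=> mA [hf zf] [hg zg]; split; first exact: IntD.
under eq_integral do rewrite /= EFinD.
rewrite integralD //; last 2 first.
  exact: (integrableS measurableT).
  exact: (integrableS measurableT).
by rewrite zf zg adde0.
Qed.

Lemma ZrZ A (k : R) f : measurable A -> Zr A f -> Zr A (fun w => k * f w)%R.
Proof.
move=> mA [hf zf]; split; first exact: IntZ.
under eq_integral do rewrite EFinM.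
by rewrite integralZl //; [rewrite zf mule0 | exact: (integrableS measurableT)].
Qed.

Lemma Zr_sum A n (F : 'I_n -> T -> R) : measurable A ->
  (forall k, Zr A (F k)) -> Zr A (fun w => \sum_(k < n) F k w)%R.
Proof.
move=> mA h; apply: (@sum_closed _ _ (Zr A)) => //; last by move=> f g; exact: ZrD.
split; first exact: Int0.
by rewrite integral0.
Qed.

End closure.

Section mwrt_closure.
Context d (T : measurableType d) (R : realType) (G : set (set T)).
Hypothesis hG : sigma_algebra setT G.

Lemma mwrtP (f : T -> R) :
  measurable_wrt G f <-> measurable_fun setT (f : g_sigma_algebraType G -> R).
Proof.
have E := measurable_g_measurableTypeE hG.
split => [h _ Y mY | h Y mY].
  by rewrite setTI E; exact: h.
by have := h measurableT Y mY; rewrite setTI E.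
Qed.

Lemma mwrt_cst (r : R) : measurable_wrt G (fun _ => r).
Proof. by apply/mwrtP; exact: measurable_cst. Qed.

Lemma mwrtD (f g : T -> R) : measurable_wrt G f -> measurable_wrt G g -> measurable_wrt G (f \+ g).
Proof. by move=> /mwrtP hf /mwrtP hg; apply/mwrtP; exact: measurable_funD. Qed.

Lemma mwrtZ (k : R) (f : T -> R) : measurable_wrt G f -> measurable_wrt G (fun w => k * f w)%R.
Proof.
move=> /mwrtP hf; apply/mwrtP; apply: measurable_funM => //; exact: measurable_cst.
Qed.

Lemma mwrt_sum n (F : 'I_n -> T -> R) :
  (forall k, measurable_wrt G (F k)) -> measurable_wrt G (fun w => \sum_(k < n) F k w)%R.
Proof. by move=> h; apply: (@sum_closed _ _ (@measurable_wrt _ _ R G)) => //; [exact: mwrt_cst | exact: mwrtD]. Qed.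

End mwrt_closure.
Local Close Scope ereal_scope.
Unset Implicit Arguments.
Theorem mainTheorem4 (d : measure_display) (T : measurableType d) (R : realType)
    (P : probability T R) (F : R -> set (set T)) (n : nat)
    (B : 'I_n -> R -> T -> R) (a sigma c : 'I_n -> R) :
  (0 < n)%N ->
  filtration F ->
  (forall k, brownian_motion P F (B k)) ->
  let Xs := fun k t w => sigma k * t * B k t w + a k * t in
  let S := fun t w => \sum_(k < n) c k * Xs k t w in
  proportional_increments P F S.
Proof.
move=> n0 hF hB Xs S t s t0 _ s0.
have [Fsig [Fmeas Fmono]] := hF.
have t0' : 0 <= t := ltW t0.
have ts0 : 0 <= t + s by rewrite addr_ge0.
have mB k u : 0 <= u -> measurable_fun setT (B k u).
  move=> u0 _ Y mY; rewrite setTI; apply: (Fmeas u u0).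
  have [_ [_ [h _]]] := hB k; exact: h u u0 Y mY.
have iB k u : 0 <= u -> Int P (B k u).
  move=> u0; have [hB0 [_ [_ [_ hd]]]] := hB k.
  have [u0'|ule0] := ltrP 0 u.
  - apply: (@integrable_normal _ _ _ P _ (Num.sqrt u)).
    + by rewrite gt_eqF // sqrtr_gt0.
    + exact: mB.
    + move=> E mE; have := hd 0 u (lexx 0) u0' E mE; rewrite add0r.
      have -> : (fun w => B k u w - B k 0 w) = B k u.
        by apply/funext => w; rewrite hB0 subr0.
      by [].
  - have -> : u = 0 by apply/le_anti; rewrite ule0 u0.
    have -> : B k 0 = fun _ => 0 by apply/funext => w; exact: hB0.
    exact: Int0.
have FB k : measurable_wrt (F t) (B k t).
  by have [_ [_ [h _]]] := hB k; exact: h.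
have zD k A : F t A -> Zr P A (fun w => B k (t + s) w - B k t w).
  move=> FA; have mA : measurable A := Fmeas t t0' A FA.
  split; first by apply: IntB; apply: iB.
  have [hB0 [_ [_ [hind hd]]]] := hB k.
  have [s0'|sle0] := ltrP 0 s.
  - apply: (@indep_mean0 _ _ _ P _ (Num.sqrt s)) => //.
    + by rewrite gt_eqF // sqrtr_gt0.
    + by apply: measurable_funB; apply: mB.
    + by move=> E mE; exact: hd.
    + by move=> E mE; exact: hind.
  - have s00 : s = 0 by apply/le_anti; rewrite sle0 s0.
    rewrite s00.
    under eq_integral do rewrite addr0 subrr.
    by rewrite integral0.
have iS u : 0 <= u -> Int P (S u).
  move=> u0; apply: Int_sum => k; apply: IntZ.
  apply: (@IntD _ _ _ P (fun w => sigma k * u * B k u w) (fun _ => a k * u)).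
    by apply: IntZ; exact: iB.
  exact: finite_measure_integrable_cst.
have mS : measurable_wrt (F t) (S t).
  apply: (mwrt_sum (Fsig t t0')) => k; apply: (mwrtZ (Fsig t t0')).
  apply: (@mwrtD _ _ _ _ (Fsig t t0') (fun w => sigma k * t * B k t w) (fun _ => a k * t)).
    by apply: (mwrtZ (Fsig t t0')).
  exact: (mwrt_cst (Fsig t t0')).
set D := fun w => \sum_(k < n) ((t + s) * (c k * sigma k)) * (B k (t + s) w - B k t w).
set Y := fun w => s / t * S t w.
have XE w : S (t + s) w - S t w = Y w + D w.
  rewrite /Y /D /S /Xs /= mulr_sumr -big_split -sumrB /=; apply: eq_bigr => k _.
  by field; rewrite gt_eqF.
split; first exact: (IntB (iS _ ts0) (iS _ t0')).
split; first exact: (mwrtZ (Fsig t t0') (s / t) mS).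
split; first exact: (IntZ (s / t) (iS _ t0')).
move=> A FA; have mA : measurable A := Fmeas t t0' A FA.
have zDA : Zr P A D.
  apply: Zr_sum => // k; apply: ZrZ => //; exact: zD.
have iD := zDA.1.
under [RHS]eq_integral do rewrite XE EFinD.
rewrite integralD //; last 2 first.
  by apply: (integrableS measurableT) => //; exact: (IntZ (s / t) (iS _ t0')).
  by apply: (integrableS measurableT) => //; exact: iD.
by rewrite zDA.2 adde0.
Qed.
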